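(* Let $k\in\mathbb{N}$ and let $G$ be a graph on $n$ vertices with minimum degree $\delta(G)\geq\delta\geq\frac{(k-1)n}{k}$. Suppose that $G$ has a $K_{k+1}$-component $C$ which does not contain a copy of $K_{k+2}$. Then there is a set of $k\delta-(k-1)n$ vertex-disjoint copies of $K_{k+1}$ in $G$ which all belong to $C$.
   Context: A $K_{k+1}$-walk in $G$ is a sequence $t_1,\dots,t_p$ of copies of $K_k$ such that for each $i\in[p-1]$ some copy of $K_{k+1}$ contains $t_i$ and $t_{i+1}$; $t_1,t_p$ are then $K_{k+1}$-connected; the equivalence classes of copies of $K_k$ are the $K_{k+1}$-components. For $\ell>k$, a copy of $K_\ell$ belongs to (is in) a component $C$ if it contains a copy of $K_k$ lying in $C$ (equivalently, all its copies of $K_k$ lie in $C$). $C$ contains a copy of $K_{k+2}$ if some copy of $K_{k+2}$ belongs to $C$. *)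

(* Defs.v *)
From mathcomp Require Import all_boot.
Set Implicit Arguments. Unset Strict Implicit. Unset Printing Implicit Defensive.

(* A simple graph: vertex set a finType T, adjacency e : rel T
   (assumed symmetric and irreflexive in the theorem). *)
Section Cliques.
Variables (T : finType) (e : rel T).

Definition is_clique (A : {set T}) : Prop :=
  forall x y, x \in A -> y \in A -> x != y -> e x y.

(* A is a copy of K_m (identified with its vertex set). *)
Definition is_copy (m : nat) (A : {set T}) : Prop :=
  is_clique A /\ #|A| = m.

Definition Kstep (k : nat) (A B : {set T}) : Prop :=
  exists Q : {set T}, is_copy k.+1 Q /\ A \subset Q /\ B \subset Q.

Fixpoint Kwalk (k : nat) (A : {set T}) (s : seq {set T}) : Prop :=
  match s with
  | [::] => True
  | B :: s' => is_copy k B /\ Kstep k A B /\ Kwalk k B s'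
  end.

Definition Kconnected (k : nat) (A B : {set T}) : Prop :=
  is_copy k A /\ is_copy k B /\
  exists s : seq {set T}, Kwalk k A s /\ last A s = B.

(* C is a K_{k+1}-component: an equivalence class of copies of K_k. *)
Definition is_Kcomponent (k : nat) (C : {set {set T}}) : Prop :=
  exists A, is_copy k A /\ forall B, B \in C <-> Kconnected k A B.

Definition belongs_to (k : nat) (C : {set {set T}}) (Q : {set T}) : Prop :=
  exists B, B \in C /\ B \subset Q.

Definition contains_copy (k : nat) (C : {set {set T}}) (l : nat) : Prop :=
  exists Q, is_copy l Q /\ belongs_to k C Q.

End Cliques.

(* Main.v *)
Require Import Defs.
From mathcomp Require Import all_boot.
From mathcomp Require Import zify.
Set Implicit Arguments. Unset Strict Implicit. Unset Printing Implicit Defensive.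

Lemma disjP (T : finType) (A B : {set T}) :
  (forall x, x \in A -> x \in B -> False) -> [disjoint A & B].
Proof.
move=> H; rewrite -setI_eq0; apply/eqP/setP => x; rewrite inE in_set0.
by apply/negP => /andP [xA xB]; exact: (H x xA xB).
Qed.

Fixpoint pdisj (T : finType) (F : seq {set T}) : Prop :=
  match F with
  | [::] => True
  | A :: F' => (forall B, B \in F' -> [disjoint A & B]) /\ pdisj F'
  end.

Lemma in_consr (T : eqType) {x y : T} {s : seq T} : x \in s -> x \in y :: s.
Proof. by move=> h; rewrite in_cons h orbT. Qed.

Lemma extend (T : finType) (N : {set T} -> {set T}) (F : seq {set T}) (D : {set T}) :
  pdisj F ->
  (forall A B, A \in F -> B \in F -> [disjoint N A & B]) ->
  (forall A, A \in F -> size F + #|D| <= #|N A|) ->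
  exists F' : seq {set T}, size F' = size F /\ pdisj F' /\
    forall A', A' \in F' -> exists2 A, A \in F &
       exists2 u, u \in N A & (u \notin D) /\ A' = u |: A.
Proof.
elim: F D => [|x F IH] D /= Hd HN Hc.
  by exists [::].
case: Hd => Hx Hd.
have: 0 < #|N x :\: D|.
  rewrite cardsD; have := Hc x (mem_head _ _).
  have := subset_leq_card (subsetIr (N x) D). lia.
rewrite card_gt0 => /set0Pn [u /setDP [uN uD]].
have Hc' : forall A, A \in F -> size F + #|u |: D| <= #|N A|.
  move=> A hA; have := Hc A (in_consr hA); rewrite cardsU1 uD /=; lia.
have [F' [sz [pd HF']]] := IH (u |: D) Hd
  (fun A B hA hB => HN A B (in_consr hA) (in_consr hB)) Hc'.
exists ((u |: x) :: F'); split; first by rewrite /= sz.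
split; last first.
  move=> A'; rewrite in_cons => /orP [/eqP ->|hA'].
    by exists x; [exact: mem_head | exists u].
  have [A hA [u' u'N [u'D ->]]] := HF' A' hA'.
  exists A; first exact: in_consr.
  exists u' => //; split => //; apply: contra u'D; exact: setU1r.
split => // B hB.
have [y hy [u' u'N [u'D ->]]] := HF' B hB.
apply: disjP => z.
rewrite !in_setU1 => /orP [/eqP ->|zx] /orP [/eqP zu'|zy].
- by move: u'D; rewrite -zu' setU11.
- by have := disjointFr (HN x y (mem_head _ _) (in_consr hy)) uN; rewrite zy.
- by have := disjointFr (HN y x (in_consr hy) (mem_head _ _)) u'N; rewrite -zu' zx.
- by have := disjointFr (Hx y hy) zx; rewrite zy.
Qed.

Definition cnbr (T : finType) (e : rel T) (S : {set T}) : {set T} :=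
  [set u | [forall x in S, e x u]].

Lemma cnbrP (T : finType) (e : rel T) (S : {set T}) u :
  reflect (forall x, x \in S -> e x u) (u \in cnbr e S).
Proof.
rewrite inE; apply: (iffP forallP) => H x.
  by move=> xS; have := H x; rewrite xS.
by apply/implyP; exact: H.
Qed.

Lemma cnbr_notin (T : finType) (e : rel T) (S : {set T}) u :
  irreflexive e -> u \in cnbr e S -> u \notin S.
Proof. by move=> irr /cnbrP H; apply/negP => /H; rewrite irr. Qed.

Lemma cnbr_anti (T : finType) (e : rel T) (S S' : {set T}) :
  S \subset S' -> cnbr e S' \subset cnbr e S.
Proof.
move=> /subsetP sub; apply/subsetP => u /cnbrP H; apply/cnbrP => x xS.
exact: H (sub x xS).
Qed.

Lemma card_Ucnbr (T : finType) (e : rel T) (S X : {set T}) :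
  irreflexive e -> X \subset cnbr e S -> #|S :|: X| = #|S| + #|X|.
Proof.
move=> irr /subsetP sub; rewrite -cardsUI.
suff -> : S :&: X = set0 by rewrite cards0 addn0.
apply/setP => x; rewrite inE in_set0; apply/negP => /andP [xS xX].
by move: (cnbr_notin irr (sub x xX)); rewrite xS.
Qed.

Lemma clique_sub (T : finType) (e : rel T) (A B : {set T}) :
  is_clique e B -> A \subset B -> is_clique e A.
Proof. by move=> cB /subsetP sub x y xA yA; apply: cB; auto. Qed.

Lemma clique_U1 (T : finType) (e : rel T) x (S : {set T}) :
  symmetric e -> is_clique e S -> (forall y, y \in S -> e y x) -> is_clique e (x |: S).
Proof.
move=> sym cS H a b /setU1P [->|aS] /setU1P [->|bS] //; first by rewrite eqxx.
- by move=> _; rewrite sym; exact: H.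
- by move=> _; exact: H.
- exact: cS.
Qed.

Lemma cnbr_card_seq (T : finType) (e : rel T) delta :
  (forall v : T, delta <= #|[set u | e v u]|) ->
  forall s : seq T, #|T| <= #|[set u | all (fun x => e x u) s]| + size s * (#|T| - delta).
Proof.
move=> md; elim => [|x s IH] /=.
  by rewrite mul0n addn0 -cardsT; apply: subset_leq_card; apply/subsetP => u; rewrite !inE.
have -> : [set u | e x u && all (fun x0 : T => e x0 u) s] =
          [set u | e x u] :&: [set u | all (fun x => e x u) s].
  by apply/setP => u; rewrite !inE.
have h1 := cardsUI [set u | e x u] [set u | all (fun x => e x u) s].
have h2 : #|[set u | e x u] :|: [set u | all (fun x => e x u) s]| <= #|T| by rewrite -cardsT subset_leq_card ?subsetT.
have h3 := md x.
have h4 : #|[set u | e x u]| <= #|T| by rewrite -cardsT subset_leq_card ?subsetT.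
rewrite mulSn. move: IH h1 h2 h3 h4. set A := #|[set u | e x u]|. set B := #|[set u | all _ s]|. set I := #|_ :&: _|. set X := size s * _. set U := #|_ :|: _|. set n := #|T|. clearbody A B I X U n. lia.
Qed.

Lemma cnbr_card (T : finType) (e : rel T) delta (S : {set T}) :
  (forall v : T, delta <= #|[set u | e v u]|) ->
  #|T| <= #|cnbr e S| + #|S| * (#|T| - delta).
Proof.
move=> md; have := cnbr_card_seq md (enum S).
have -> : [set u | all (fun x => e x u) (enum S)] = cnbr e S.
  apply/setP => u; rewrite [in RHS]/cnbr !inE; apply/allP/forallP => H x.
    by apply/implyP => xS; apply: H; rewrite mem_enum.
  by rewrite mem_enum => xS; have := H x; rewrite xS.
by rewrite -cardE.
Qed.

Lemma s_le (T : finType) (e : rel T) k delta (S : {set T}) :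
  (forall v : T, delta <= #|[set u | e v u]|) -> delta <= #|T| -> #|S| = k ->
  k * delta - (k - 1) * #|T| <= #|cnbr e S|.
Proof.
move=> md dn cS; have := cnbr_card S md; rewrite cS.
rewrite mulnBr mulnBl mul1n.
have : k * delta <= k * #|T| by rewrite leq_mul2l dn orbT.
lia.
Qed.

Lemma Kwalk_rcons (T : finType) (e : rel T) k A s B :
  Kwalk e k A s -> is_copy e k B -> Kstep e k (last A s) B -> Kwalk e k A (rcons s B).
Proof.
elim: s A => [|C s IH] A /=; first by move=> _ cB st; split => //.
by move=> [cC [st1 w]] cB st; split => //; split => //; exact: IH.
Qed.

Lemma inC_copy (T : finType) (e : rel T) k (C : {set {set T}}) (B : {set T}) :
  is_Kcomponent e k C -> B \in C -> is_copy e k B.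
Proof. by move=> [A [cA H]] /H [_ [cB _]]. Qed.

Lemma inC_closed (T : finType) (e : rel T) k (C : {set {set T}}) (B Q B' : {set T}) :
  is_Kcomponent e k C -> B \in C -> is_copy e k.+1 Q -> B \subset Q ->
  B' \subset Q -> #|B'| = k -> B' \in C.
Proof.
move=> [A [cA H]] /H [_ [cB [s [w ls]]]] [cQ cardQ] BQ B'Q cB'.
have cpB' : is_copy e k B' by split => //; exact: clique_sub cQ B'Q.
apply/H; split => //; split => //.
exists (rcons s B'); split; last by rewrite last_rcons.
apply: Kwalk_rcons => //; rewrite ls; exists Q; split => //; split.
Qed.

Lemma claim (T : finType) (e : rel T) (k delta : nat)
  (e_sym : symmetric e) (e_irr : irreflexive e)
  (mindeg : forall v : T, delta <= #|[set u | e v u]|)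
  (dn : delta <= #|T|)
  (C : {set {set T}})
  (hC : is_Kcomponent e k C)
  (noK : ~ contains_copy e k C k.+2) :
  forall m (P : {set T}), is_clique e P -> #|P| + m = k.+1 ->
  (exists2 B, B \in C & P \subset B) ->
  exists F : seq {set T}, size F = k * delta - (k - 1) * #|T| /\ pdisj F /\
    forall X, X \in F -> [/\ #|X| = m, X \subset cnbr e P, is_clique e (P :|: X) &
       exists2 B, B \in C & B \subset P :|: X].
Proof.
elim => [|m IH] P cP cardP [B BC PB].
  have [_ cB] := inC_copy hC BC.
  have := subset_leq_card PB; lia.
have [F0 [sz0 [pd0 [H0 H0']]]] : exists F0 : seq {set T},
   size F0 = k * delta - (k - 1) * #|T| /\ pdisj F0 /\
   (forall X, X \in F0 -> [/\ #|X| = m, X \subset cnbr e P, is_clique e (P :|: X) &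
       P :|: X \in C]) /\
   (forall X Y, X \in F0 -> Y \in F0 -> [disjoint cnbr e (P :|: X) & Y]).
  have [_ cB] := inC_copy hC BC.
  case: m IH cardP => [|m] IH cardP.
    have PeB : P = B.
      by apply/eqP; rewrite eqEcard PB cB; lia.
    exists (nseq (k * delta - (k - 1) * #|T|) set0); split; first by rewrite size_nseq.
    split.
      elim: (k * delta - (k - 1) * #|T|) => //= n IHn; split => // Y _.
      by apply: disjP => x; rewrite in_set0.
    split.
      move=> X /[!mem_nseq] /andP [_ /eqP ->]; rewrite setU0 cards0 sub0set; split => //; by rewrite PeB.

    move=> X Y _ /[!mem_nseq] /andP [_ /eqP ->].
    by apply: disjP => x _; rewrite in_set0.
  have [clB _] := inC_copy hC BC.
  have : 0 < #|B :\: P|.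
    rewrite cardsD; have := subset_leq_card (subsetIr B P); lia.
  rewrite card_gt0 => /set0Pn [v /setDP [vB vP]].
  have P'B : v |: P \subset B by apply/subsetP => y /setU1P [->|/(subsetP PB)].
  have cP' : is_clique e (v |: P) := clique_sub clB P'B.
  have cardP' : #|v |: P| + m.+1 = k.+1 by rewrite cardsU1 vP /=; lia.
  have [F' [szF' [pdF' HF']]] := IH (v |: P) cP' cardP' (ex_intro2 _ _ B BC P'B).
  have PP' : P \subset v |: P := subsetUr _ _.
  exists F'; split => //; split => //; split.
    move=> X hX; have [cX sX clX [B0 B0C B0s]] := HF' X hX.
    have sXP : X \subset cnbr e P := subset_trans sX (cnbr_anti e PP').
    split => //.
      exact: clique_sub clX (setSU _ PP').
    apply: (inC_closed hC B0C (Q := (v |: P) :|: X)) => //.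
    - by split => //; rewrite (card_Ucnbr e_irr sX) cX; move: cardP'; clear; lia.
    - exact: setSU _ PP'.
    - by rewrite (card_Ucnbr e_irr sXP) cX; move: cardP; clear; lia.
  move=> X Y hX hY; apply: disjP => u uN uY.
  have [cX sX clX [B0 B0C B0s]] := HF' X hX.
  have [_ sY _ _] := HF' Y hY.
  have uP' : u \in cnbr e (v |: P) := subsetP sY u uY.
  have sXP : X \subset cnbr e P := subset_trans sX (cnbr_anti e PP').
  have PXC : P :|: X \in C.
    apply: (inC_closed hC B0C (Q := (v |: P) :|: X)) => //.
    - by split => //; rewrite (card_Ucnbr e_irr sX) cX; move: cardP'; clear; lia.
    - exact: setSU _ PP'.
    - by rewrite (card_Ucnbr e_irr sXP) cX; move: cardP; clear; lia.
  apply: noK; exists (u |: ((v |: P) :|: X)); split; last first.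
    exists (P :|: X); split => //.
    apply: subset_trans (subsetUr _ _); exact: setSU _ PP'.
  have uvPX : u \notin (v |: P) :|: X.
    rewrite in_setU negb_or (cnbr_notin e_irr uP') /=.
    by have := cnbr_notin e_irr uN; rewrite in_setU negb_or => /andP [].
  split.
    apply: clique_U1 => // y.
    rewrite -setUA => /setU1P [->|yPX].
      by move/cnbrP: uP'; apply; exact: setU11.
    by move/cnbrP: uN; apply.
  rewrite cardsU1 uvPX (card_Ucnbr e_irr sX) cardsU1 vP cX /=; move: cardP; clear; lia.
have Hc : forall X, X \in F0 -> size F0 + #|@set0 T| <= #|cnbr e (P :|: X)|.
  move=> X hX; have [cX sX _ _] := H0 X hX.
  rewrite cards0 addn0 sz0; apply: s_le => //.
  rewrite (card_Ucnbr e_irr sX); lia.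
have [F [szF [pdF HF]]] := @extend _ (fun X => cnbr e (P :|: X)) F0 set0 pd0 H0' Hc.
exists F; split; first by rewrite szF.
split => // Y /HF [X hX [u uN [_ ->]]].
have [cX sX clX inX] := H0 X hX.
have uX : u \notin X.
  by apply: contraT => /negbNE ux; have := cnbr_notin e_irr uN; rewrite in_setU ux orbT.
split.
- by rewrite cardsU1 uX cX.
- apply/subsetP => y /setU1P [->|yX].
    by move: uN; apply/subsetP/cnbr_anti/subsetUl.
  exact: (subsetP sX).
- have -> : P :|: (u |: X) = u |: (P :|: X).
    by apply/setP => y; rewrite !inE; case: (y == u); case: (y \in P).
  apply: clique_U1 => // y hy; by move/cnbrP: uN; apply.
- by exists (P :|: X) => //; rewrite setUS // subsetUr.
Qed.

Lemma pdisj_uniq (T : finType) (F : seq {set T}) :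
  pdisj F -> (forall X, X \in F -> 0 < #|X|) -> uniq F.
Proof.
elim: F => //= X F IH [HX pd] Hne; apply/andP; split; last first.
  by apply: IH => // Y hY; apply: Hne; exact: in_consr.
apply/negP => XF; have := HX X XF.
have := Hne X (mem_head _ _); rewrite card_gt0 => /set0Pn [x xX].
by move/disjointFr => /(_ x xX); rewrite xX.
Qed.

Lemma pdisj_mem (T : finType) (F : seq {set T}) X Y :
  pdisj F -> X \in F -> Y \in F -> X != Y -> [disjoint X & Y].
Proof.
elim: F => //= Z F IH [HZ pd].
rewrite !in_cons => /orP [/eqP ->|hX] /orP [/eqP ->|hY].
- by rewrite eqxx.
- by move=> _; exact: HZ.
- by move=> _; rewrite disjoint_sym; exact: HZ.
- exact: IH.
Qed.

Theorem lemma4p2 (T : finType) (e : rel T) (k delta : nat)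
  (e_sym : symmetric e) (e_irr : irreflexive e)
  (k_pos : 1 <= k)
  (mindeg : forall v : T, delta <= #|[set u | e v u]|)
  (hdelta : (k - 1) * #|T| <= k * delta)
  (C : {set {set T}})
  (hC : is_Kcomponent e k C)
  (noK : ~ contains_copy e k C k.+2) :
  exists F : {set {set T}},
    #|F| = k * delta - (k - 1) * #|T| /\
    (forall Q, Q \in F -> is_copy e k.+1 Q /\ belongs_to k C Q) /\
    (forall Q Q', Q \in F -> Q' \in F -> Q != Q' -> [disjoint Q & Q']).
Proof.
have hC' := hC; case: hC' => A [[clA cA] HA].
have AC : A \in C.
  by apply/HA; split; first by []; split; first by []; exists [::].
have dn : delta <= #|T|.
  have : 0 < #|A| by rewrite cA.
  rewrite card_gt0 => /set0Pn [x _].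
  apply: leq_trans (mindeg x) _; by rewrite -cardsT subset_leq_card ?subsetT.
have cl0 : is_clique e (@set0 T) by move=> x y; rewrite in_set0.
have c0 : #|@set0 T| + k.+1 = k.+1 by rewrite cards0.
have [F [szF [pdF HF]]] := claim e_sym e_irr mindeg dn hC noK cl0 c0
  (ex_intro2 _ _ A AC (sub0set A)).
have uF : uniq F.
  apply: (pdisj_uniq pdF) => X /HF [-> _ _ _]; by [].
exists [set X in F]; split.
  by rewrite cardsE; move/card_uniqP: uF => ->.
split.
  move=> Q; rewrite inE => /HF [cQ _ clQ [B BC BQ]].
  rewrite set0U in clQ BQ.
  by split; [split | exists B].
by move=> Q Q'; rewrite !inE; exact: pdisj_mem.
Qed.
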